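(* Let $G$ be a topological group, $m\in\mathbb N\cup\{\infty\}$, $\rho\colon G\to\mathrm{Isom}(\mathbf H^m_{\mathbb C})_o$ a representation, and $x\in\mathbf H^m_{\mathbb C}$ a point with total orbit. Let $\alpha(g_1,g_2,g_3)=\mathrm{Cart}(\rho(g_1)x,\rho(g_2)x,\rho(g_3)x)$. If there exists an alternating $G$-invariant $1$-cochain $\omega\colon G^2\to\mathbb R$ with $\partial\omega=\alpha$, then $\rho$ admits a lift to a homomorphism $\tilde\rho\colon G\to U(1,m)$ (i.e. $\tilde\rho(g)$ induces $\rho(g)$ for every $g$).
   Context: $\mathbf H^m_{\mathbb C}$ is the projectivization of the positive vectors of a separable complex Hilbert space with a strongly non-degenerate Hermitian form $B$ of signature $(1,m)$ (linear in the first variable), with $\cosh d([v],[w])=|B(v,w)|/\sqrt{B(v,v)B(w,w)}$; $U(1,m)$ is the group of $B$-unitary maps, and $\mathrm{Isom}(\mathbf H^m_{\mathbb C})_o=PU(1,m)$. A representation is an orbitally continuous homomorphism. A subset of $\mathbf H^m_{\mathbb C}$ is total if no proper closed complex subspace contains lifts of all its points. The Cartan argument is $\mathrm{Cart}(x,y,z)=\arg\big(B(\tilde x,\tilde y)B(\tilde y,\tilde z)B(\tilde z,\tilde x)\big)\in(-\pi/2,\pi/2)$ for any lifts. A $1$-cochain $\omega$ is alternating if $\omega(l,g)=-\omega(g,l)$ and $G$-invariant if $\omega(hg,hl)=\omega(g,l)$; $\partial\omega(g,l,k)=\omega(l,k)-\omega(g,k)+\omega(g,l)$. *)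

(* Defs.v *)
From HB Require Import structures.
From mathcomp Require Import all_boot all_order all_algebra.
From mathcomp Require Import all_classical all_reals all_analysis.
From mathcomp Require Import complex.

Set Implicit Arguments.
Unset Strict Implicit.
Unset Printing Implicit Defensive.

Import Order.TTheory GRing.Theory Num.Theory.
Import numFieldNormedType.Exports.
Local Open Scope ring_scope.
Local Open Scope complex_scope.
Local Open Scope classical_set_scope.

Definition is_topological_group (G : topologicalType)
    (mul : G -> G -> G) (inv : G -> G) (one : G) : Prop :=
  [/\ (forall a b c, mul a (mul b c) = mul (mul a b) c),
      (forall a, mul one a = a),
      (forall a, mul (inv a) a = one),
      continuous (fun p : G * G => mul p.1 p.2) &
      continuous inv].

(* The standard model of the separable complex Hilbert space with a       *)
(* Hermitian form of signature (1,m), m in N u {oo} (None = oo):          *)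
(* sequences z : nat -> C, square summable, with z k = 0 for k > m.       *)
(* B(v,w) = v_0 conj(w_0) - sum_{k>=1} v_k conj(w_k)  (linear in v).     *)

Section Model.
Variable R : realType.

Definition vec := nat -> R[i].

Definition vadd (v w : vec) : vec := fun k => v k + w k.
Definition vscale (a : R[i]) (v : vec) : vec := fun k => a * v k.
Definition vsub (v w : vec) : vec := fun k => v k - w k.

Definition cabs2 (z : R[i]) : R := (complex.Re z) ^+ 2 + (complex.Im z) ^+ 2.

Definition inV (m : option nat) (z : vec) : Prop :=
  (forall n k, m = Some n -> (n < k)%N -> z k = 0) /\
  cvg (series (fun k => cabs2 (z k)) @ \oo).

Definition hnorm2 (z : vec) : R := \big[+%R/0%R]_(0 <= k <oo) cabs2 (z k).

Definition Bre (v w : vec) : R :=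
  complex.Re (v 0%N * (w 0%N)^*) - \big[+%R/0%R]_(1 <= k <oo) complex.Re (v k * (w k)^*).
Definition Bim (v w : vec) : R :=
  complex.Im (v 0%N * (w 0%N)^*) - \big[+%R/0%R]_(1 <= k <oo) complex.Im (v k * (w k)^*).
Definition B (v w : vec) : R[i] := (Bre v w +i* Bim v w).

(* points of H^m_C are represented by their (positive) lifts *)
Definition positive (m : option nat) (v : vec) : Prop := inV m v /\ 0 < Bre v v.

(* the complex hyperbolic distance: cosh d = |B(v,w)| / sqrt(B(v,v) B(w,w)) *)
Definition hdist (v w : vec) : R :=
  let c := Num.sqrt (cabs2 (B v w)) / Num.sqrt (Bre v v * Bre w w) in
  ln (c + Num.sqrt (c ^+ 2 - 1)).

(* Cartan argument: arg of B(x,y)B(y,z)B(z,x), which lies in the open right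
   half plane, so arg = atan (Im / Re) with values in (-pi/2, pi/2). *)
Definition Cart (x y z : vec) : R :=
  let p := B x y * B y z * B z x in atan (complex.Im p / complex.Re p).

Definition Bunitary (m : option nat) (T : vec -> vec) : Prop :=
  [/\ (forall v, inV m v -> inV m (T v)),
      (forall a v w, inV m v -> inV m w ->
          T (vadd (vscale a v) w) = vadd (vscale a (T v)) (T w)),
      (forall v w, inV m v -> inV m w -> T v = T w -> v = w),
      (forall w, inV m w -> exists2 v, inV m v & T v = w) &
      (forall v w, inV m v -> inV m w -> B (T v) (T w) = B v w)].

Definition closed_subspace (m : option nat) (W : set vec) : Prop :=
  [/\ (forall v, W v -> inV m v),
      W (fun _ => 0),
      (forall a v w, W v -> W w -> W (vadd (vscale a v) w)) &
      (forall (s : nat -> vec) v, (forall n, W (s n)) -> inV m v ->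
          (fun n => hnorm2 (vsub (s n) v)) @ \oo --> (0 : R) -> W v)].

End Model.

(* A representation G -> Isom(H^m_C)_o = PU(1,m): each rho g is a chosen
   representative in U(1,m); rho is a homomorphism modulo unit scalars,
   and it is orbitally continuous for the hyperbolic metric. *)
Definition pu_representation (R : realType) (G : topologicalType)
    (mul : G -> G -> G) (m : option nat) (rho : G -> vec R -> vec R) : Prop :=
  [/\ (forall g, Bunitary m (rho g)),
      (forall g h, exists2 lam : R[i], cabs2 lam = 1 &
          forall v, inV m v -> rho (mul g h) v = vscale lam (rho g (rho h v))) &
      (forall y, positive m y -> forall (g0 : G) (eps : R), 0 < eps ->
          \forall g \near g0, hdist (rho g y) (rho g0 y) < eps)].

Definition total_orbit (R : realType) (G : Type) (m : option nat)
    (rho : G -> vec R -> vec R) (x : vec R) : Prop :=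
  forall W : set (vec R), closed_subspace m W ->
    (forall g, exists2 u, W u & exists2 lam : R[i], lam != 0 & u = vscale lam (rho g x)) ->
    forall v, inV m v -> W v.

(* Main.v *)
Require Import Defs.
From HB Require Import structures.
From mathcomp Require Import all_boot all_order all_algebra.
From mathcomp Require Import all_classical all_reals all_analysis.
From mathcomp Require Import complex.
From mathcomp Require Import ring lra.
Import Order.TTheory GRing.Theory Num.Theory.
Import numFieldNormedType.Exports.
Set Implicit Arguments.
Unset Strict Implicit.
Local Open Scope ring_scope.

Section Aux.
Variable R : realType.

Lemma series_lin (r s : R) (f g h : R^nat) :
  cvgn (series f) -> cvgn (series g) -> cvgn (series h) ->
  cvgn (series (fun k => r * f k + s * g k + h k)) /\
  limn (series (fun k => r * f k + s * g k + h k)) =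
    r * limn (series f) + s * limn (series g) + limn (series h).
Proof.
move=> cf cg ch.
have -> : series (fun k => r * f k + s * g k + h k) =
   (r *: series f + s *: series g + series h).
  apply/funext => n; rewrite /series /= !big_split /= -!mulr_sumr.
  by [].
split.
  apply: is_cvgD; last exact: ch.
  by apply: is_cvgD; apply: is_cvgZr.
rewrite limD //; last by apply: is_cvgD; apply: is_cvgZr.
rewrite limD //; try apply: is_cvgZr => //.
by rewrite !limZl_tmp.
Qed.

Lemma dom_cvg (a b : R^nat) : (forall k, - b k <= a k <= b k) ->
  cvgn (series b) -> cvgn (series a).
Proof.
move=> hab cb.
have ca : cvgn (series (fun k => a k + b k)).
  apply: (@series_le_cvg R _ (fun k => 2 * b k)).
  - by move=> k; have := hab k; lra.
  - by move=> k; have := hab k; lra.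
  - by move=> k; have := hab k; lra.
  have := @series_lin 2 0 b b (fun=> 0) cb cb.
  have c0 : cvgn (series (fun=> (0:R))).
    rewrite (_ : series (fun=> 0) = fun=> 0); first exact: is_cvg_cst.
    by apply/funext => n; rewrite /series /= big1.
  move=> /(_ c0).
  have -> : (fun k => 2 * b k + 0 * b k + 0) = (fun k => 2 * b k).
    by apply/funext => k; rewrite mul0r !addr0.
  by case.
have := @series_lin 1 (-1) (fun k => a k + b k) b (fun=> 0) ca cb.
have c0 : cvgn (series (fun=> (0:R))).
  rewrite (_ : series (fun=> 0) = fun=> 0); first exact: is_cvg_cst.
  by apply/funext => n; rewrite /series /= big1.
move=> /(_ c0).
have -> : (fun k => 1 * (a k + b k) + -1 * b k + 0) = a.
  by apply/funext => k; ring.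
by case.
Qed.


Local Open Scope complex_scope.

Lemma cvg0 : cvgn (series (fun=> (0:R))).
Proof.
rewrite (_ : series (fun=> 0) = fun=> 0); first exact: is_cvg_cst.
by apply/funext => n; rewrite /series /= big1.
Qed.

Lemma lim0 : limn (series (fun=> (0:R))) = 0.
Proof.
rewrite (_ : series (fun=> 0) = fun=> 0); first exact: lim_cst.
by apply/funext => n; rewrite /series /= big1.
Qed.

Lemma tailE (F : nat -> R) n :
  \sum_(1 <= k < n) F k = series (fun k => if k == 0%N then 0 else F k) n.
Proof.
case: n => [|n]; first by rewrite /series /= !big_geq.
rewrite /series /= [RHS]big_nat_recl //= add0r big_add1 /=.
by [].
Qed.

Definition tre (u w : vec R) : R^nat :=
  fun k => if k == 0%N then 0 else complex.Re (u k * (w k)^*).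
Definition tim (u w : vec R) : R^nat :=
  fun k => if k == 0%N then 0 else complex.Im (u k * (w k)^*).

Lemma BreE (u w : vec R) : Bre u w = complex.Re (u 0%N * (w 0%N)^*) - limn (series (tre u w)).
Proof.
rewrite /Bre (_ : (fun n => \sum_(1 <= k < n) complex.Re (u k * (w k)^*)) = series (tre u w)) //.
by apply/funext => n; rewrite tailE.
Qed.

Lemma BimE (u w : vec R) : Bim u w = complex.Im (u 0%N * (w 0%N)^*) - limn (series (tim u w)).
Proof.
rewrite /Bim (_ : (fun n => \sum_(1 <= k < n) complex.Im (u k * (w k)^*)) = series (tim u w)) //.
by apply/funext => n; rewrite tailE.
Qed.

Lemma inV_cvg m (u : vec R) : inV m u -> cvgn (series (fun k => cabs2 (u k))).
Proof. by case. Qed.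

Lemma cabs2_ge0 (z : R[i]) : 0 <= cabs2 z.
Proof. by rewrite /cabs2 addr_ge0 // sqr_ge0. Qed.

Lemma re_bound (z w : R[i]) :
  - (1 * cabs2 z + 1 * cabs2 w + 0) <= complex.Re (z * w^*) <= 1 * cabs2 z + 1 * cabs2 w + 0.
Proof.
case: z => a b; case: w => c d; rewrite /cabs2 /=.
have h1 := sqr_ge0 (a+c); have h2 := sqr_ge0 (a-c).
have h3 := sqr_ge0 (b+d); have h4 := sqr_ge0 (b-d).
apply/andP; split; nra.
Qed.

Lemma im_bound (z w : R[i]) :
  - (1 * cabs2 z + 1 * cabs2 w + 0) <= complex.Im (z * w^*) <= 1 * cabs2 z + 1 * cabs2 w + 0.
Proof.
case: z => a b; case: w => c d; rewrite /cabs2 /=.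
have h1 := sqr_ge0 (a+d); have h2 := sqr_ge0 (a-d).
have h3 := sqr_ge0 (b+c); have h4 := sqr_ge0 (b-c).
apply/andP; split; nra.
Qed.

Lemma cvg_tre m (u w : vec R) : inV m u -> inV m w -> cvgn (series (tre u w)) /\ cvgn (series (tim u w)).
Proof.
move=> /inV_cvg cu /inV_cvg cw.
have cb : cvgn (series (fun k => 1 * cabs2 (u k) + 1 * cabs2 (w k) + 0)).
  by case: (series_lin 1 1 cu cw cvg0).
split; apply: dom_cvg cb => k; rewrite /tre /tim; case: eqP => _;
  rewrite ?re_bound ?im_bound //;
  have := cabs2_ge0 (u k); have := cabs2_ge0 (w k); move=> *; apply/andP; split; lra.
Qed.


Lemma cabs2M (a z : R[i]) : cabs2 (a * z) = cabs2 a * cabs2 z.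
Proof. case: a => a b; case: z => c d; rewrite /cabs2 /=; ring. Qed.

Lemma cabs2D (p q : R[i]) : cabs2 (p + q) <= 2 * cabs2 p + 2 * cabs2 q.
Proof.
case: p => a b; case: q => c d; rewrite /cabs2 /=.
have h1 := sqr_ge0 (a-c); have h2 := sqr_ge0 (b-d); nra.
Qed.

Lemma inV_lin m a (u v : vec R) : inV m u -> inV m v -> inV m (vadd (vscale a u) v).
Proof.
move=> [hu cu] [hv cv]; split.
  by move=> n k hm hk; rewrite /vadd /vscale (hu n k hm hk) (hv n k hm hk) mulr0 addr0.
have cb : cvgn (series (fun k => (2 * cabs2 a) * cabs2 (u k) + 2 * cabs2 (v k) + 0)).
  by case: (series_lin (2 * cabs2 a) 2 cu cv cvg0).
apply: (@series_le_cvg R _ _ _ _ _ cb) => k.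
- exact: cabs2_ge0.
- have := cabs2_ge0 a; have := cabs2_ge0 (u k); have := cabs2_ge0 (v k).
  move=> *; rewrite addr0; apply: addr_ge0; last lra.
  by apply: mulr_ge0 => //; lra.
- rewrite /vadd /vscale addr0 -mulrA -cabs2M; exact: cabs2D.
Qed.

Lemma re_lin (a b c d : R[i]) : complex.Re ((a * b + c) * d^*) =
  complex.Re a * complex.Re (b * d^*) + (- complex.Im a) * complex.Im (b * d^*) + complex.Re (c * d^*).
Proof. case: a => a1 a2; case: b => b1 b2; case: c => c1 c2; case: d => d1 d2 /=; ring. Qed.

Lemma im_lin (a b c d : R[i]) : complex.Im ((a * b + c) * d^*) =
  complex.Im a * complex.Re (b * d^*) + complex.Re a * complex.Im (b * d^*) + complex.Im (c * d^*).
Proof. case: a => a1 a2; case: b => b1 b2; case: c => c1 c2; case: d => d1 d2 /=; ring. Qed.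

Lemma Blin_parts m a (u v w : vec R) : inV m u -> inV m v -> inV m w ->
  Bre (vadd (vscale a u) v) w = complex.Re a * Bre u w + (- complex.Im a) * Bim u w + Bre v w /\
  Bim (vadd (vscale a u) v) w = complex.Im a * Bre u w + complex.Re a * Bim u w + Bim v w.
Proof.
move=> iu iv iw.
have [cru ciu] := cvg_tre iu iw.
have [crv civ] := cvg_tre iv iw.
rewrite !BreE !BimE.
have er : tre (vadd (vscale a u) v) w =
   (fun k => complex.Re a * tre u w k + (- complex.Im a) * tim u w k + tre v w k).
  apply/funext => k; rewrite /tre /tim /vadd /vscale; case: eqP => _; first ring.
  exact: re_lin.
have ei : tim (vadd (vscale a u) v) w =
   (fun k => complex.Im a * tre u w k + complex.Re a * tim u w k + tim v w k).
  apply/funext => k; rewrite /tre /tim /vadd /vscale; case: eqP => _; first ring.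
  exact: im_lin.
rewrite er ei.
have [_ ->] := series_lin (complex.Re a) (- complex.Im a) cru ciu crv.
have [_ ->] := series_lin (complex.Im a) (complex.Re a) cru ciu civ.
rewrite /vadd /vscale re_lin im_lin.
split; ring.
Qed.

Lemma Blin m a (u v w : vec R) : inV m u -> inV m v -> inV m w ->
  B (vadd (vscale a u) v) w = a * B u w + B v w.
Proof.
move=> iu iv iw; have [h1 h2] := Blin_parts a iu iv iw.
rewrite /B h1 h2; clear h1 h2; case: a => a1 a2 /=.
apply/eqP; rewrite eq_complex /=; apply/andP; split; apply/eqP; ring.
Qed.

Lemma Bre_sym (u w : vec R) : Bre w u = Bre u w.
Proof.
rewrite !BreE.
have -> : tre w u = tre u w.
  apply/funext => k; rewrite /tre; case: eqP => // _.
  case: (u k) => a b; case: (w k) => c d /=; ring.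
by congr (_ - _); case: (u 0%N) => a b; case: (w 0%N) => c d /=; ring.
Qed.

Lemma Bim_sym m (u w : vec R) : inV m u -> inV m w -> Bim w u = - Bim u w.
Proof.
move=> iu iw; have [_ ci] := cvg_tre iu iw.
rewrite !BimE.
have -> : tim w u = (fun k => (-1) * tim u w k + 0 * tim u w k + 0).
  apply/funext => k; rewrite /tim; case: eqP => _; first ring.
  case: (u k) => a b; case: (w k) => c d /=; ring.
have [_ ->] := series_lin (-1) 0 ci ci cvg0.
rewrite lim0.
case: (u 0%N) => a b; case: (w 0%N) => c d /=; ring.
Qed.

Lemma B_sym m (u w : vec R) : inV m u -> inV m w -> B w u = (B u w)^*.
Proof.
move=> iu iw; rewrite /B (Bim_sym iu iw) Bre_sym /=.
by [].
Qed.

Lemma Bre_nonpos m (w : vec R) : inV m w -> w 0%N = 0 -> Bre w w <= 0.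
Proof.
move=> iw w0; have [cr _] := cvg_tre iw iw.
rewrite BreE w0 mul0r /=.
have : limn (series (fun=> (0:R))) <= limn (series (tre w w)).
  apply: lim_series_le => // k; first exact: cvg0.
  rewrite /tre; case: eqP => // _; case: (w k) => a b /=.
  have := sqr_ge0 a; have := sqr_ge0 b; rewrite !expr2 => *; nra.
rewrite lim0; lra.
Qed.


Lemma cE (t : R[i]) : t = (complex.Re t +i* complex.Im t).
Proof. by case: t. Qed.

Lemma Bim_self m (v : vec R) : inV m v -> Bim v v = 0.
Proof. move=> iv; have := Bim_sym iv iv; lra. Qed.

Lemma neg_compl m (x u : vec R) : positive m x -> inV m u -> B u x = 0 -> Bre u u <= 0.
Proof.
move=> [ix Xpos] iu ux.
have x0 : x 0%N != 0.
  apply/negP => /eqP h; have := Bre_nonpos ix h; lra.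
pose t := - u 0%N / x 0%N.
pose w := vadd (vscale t x) u.
have iw : inV m w := inV_lin t ix iu.
have w0 : w 0%N = 0 by rewrite /w /vadd /vscale /t; field.
have hw := Bre_nonpos iw w0.
have ewx : B w x = t * B x x by rewrite /w (Blin t ix iu ix) ux addr0.
have ewu : B w u = t * (B u x)^* + B u u by rewrite /w (Blin t ix iu iu) (B_sym iu ix).
have eww : B w w = t * (B w x)^* + (B w u)^*.
  by rewrite {1}/w (Blin t ix iu iw) (B_sym iw ix) (B_sym iw iu).
rewrite ewx ewu ux in eww.
have := congr1 (@complex.Re R) eww.
rewrite /B (Bim_self ix) (Bim_self iu) (cE t) /=.
move=> e; rewrite e in hw.
have h : 0 <= ((complex.Re t)^+2 + (complex.Im t)^+2) * Bre x x.
  by apply: mulr_ge0; [apply: addr_ge0; apply: sqr_ge0 | lra].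
nra.
Qed.

Lemma cs_real (c U W : R) : 0 <= c -> U <= 0 -> W <= 0 ->
  (forall s, s ^+ 2 * c * U + 2 * s * c + W <= 0) -> c <= U * W.
Proof.
move=> c0 U0 W0 hs.
have [->|cn] := eqVneq c 0; first nra.
have cp : 0 < c by rewrite lt_neqAle eq_sym cn.
have [Un|Uz] := ltP U 0.
  have := hs (- U^-1).
  have e : (- U^-1) ^+ 2 * c * U + 2 * (- U^-1) * c + W = - c / U + W.
    by field; rewrite lt_eqF.
  rewrite e => h.
  have : 0 <= (c / U - W) * (- U) by apply: mulr_ge0; lra.
  have -> : (c / U - W) * (- U) = - c + W * U by field; rewrite lt_eqF.
  nra.
have U00 : U = 0 by lra.
have := hs ((1 - W) / (2 * c)).
rewrite U00 mulr0 add0r.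
have -> : 2 * ((1 - W) / (2 * c)) * c = 1 - W by field; rewrite gt_eqF.
lra.
Qed.

Lemma cs_compl m (x u w : vec R) : positive m x -> inV m u -> inV m w ->
  B u x = 0 -> B w x = 0 -> cabs2 (B u w) <= Bre u u * Bre w w.
Proof.
move=> px iu iw ux wx; have ix := px.1.
have U0 := neg_compl px iu ux; have W0 := neg_compl px iw wx.
have key : forall t, let z := vadd (vscale t u) w in
   complex.Re (B z z) = cabs2 t * Bre u u + 2 * complex.Re (t * B u w) + Bre w w.
  move=> t z; have iz : inV m z := inV_lin t iu iw.
  have ezz : B z z = t * (t * B u u + (B u w)^*)^* + (t * B u w + B w w)^*.
    rewrite {1}/z (Blin t iu iw iz) (B_sym iz iu) (B_sym iz iw).
    by rewrite /z (Blin t iu iw iu) (Blin t iu iw iw) (B_sym iu iw).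
  rewrite ezz /B (Bim_self iu) (Bim_self iw) (cE t) /cabs2 /=.
  ring.
apply: cs_real => //; first exact: cabs2_ge0.
move=> s.
pose t := (s%:C * (B u w)^*).
have iz : inV m (vadd (vscale t u) w) := inV_lin t iu iw.
have zx : B (vadd (vscale t u) w) (vadd (vscale t u) w) = B (vadd (vscale t u) w) (vadd (vscale t u) w) by [].
have hz : Bre (vadd (vscale t u) w) (vadd (vscale t u) w) <= 0.
  have : B (vadd (vscale t u) w) x = 0 by rewrite (Blin t iu iw px.1) ux wx mulr0 addr0.
  by move=> /(neg_compl px iz).
have := key t; simpl => e; rewrite e in hz.
move: hz; rewrite /t /cabs2 /B (cE (Bre u w +i* Bim u w)) /=.
move=> hz; nra.
Qed.


Lemma conjE (z : R[i]) : Num.conj z = conjc z.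
Proof. reflexivity. Qed.

Lemma cp_id1 (al be b : R[i]) (X : R) :
  complex.Re (conjc (al * X%:C) * (al * conjc (be * X%:C) + b) * (be * X%:C)) =
   X ^+ 2 * (cabs2 al * cabs2 be * X + complex.Re (conjc al * be * b)).
Proof. rewrite /cabs2; case: al => a1 a2; case: be => b1 b2; case: b => c1 c2 /=; ring. Qed.

Lemma cp_id2 (al be b : R[i]) : cabs2 (conjc al * be * b) = cabs2 al * cabs2 be * cabs2 b.
Proof. rewrite /cabs2; case: al => a1 a2; case: be => b1 b2; case: b => c1 c2 /=; ring. Qed.

Lemma cp_alg (al be b : R[i]) (X U W : R) : 0 < X -> U <= 0 -> W <= 0 ->
  cabs2 b <= U * W -> 0 < cabs2 al * X + U -> 0 < cabs2 be * X + W ->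
  0 < complex.Re (conjc (al * X%:C) * (al * conjc (be * X%:C) + b) * (be * X%:C)).
Proof.
move=> X0 U0 W0 hb ha hbe.
pose q := conjc al * be * b.
have e1 := cp_id1 al be b X.
have e2 : cabs2 q = cabs2 al * cabs2 be * cabs2 b by exact: cp_id2.
have e3 : complex.Re q ^+ 2 <= cabs2 q.
  rewrite /cabs2; have := sqr_ge0 (complex.Im q); lra.
rewrite e1; move: (cabs2_ge0 b) (cabs2_ge0 al) (cabs2_ge0 be) e2 e3 hb ha hbe.
move: (complex.Re q) (cabs2 q) (cabs2 al) (cabs2 be) (cabs2 b).
move=> r Q A Bq c c0 Ag Bg e2 e3 hb ha hbe.
have A0 : 0 < A.
  rewrite lt_neqAle Ag andbT; apply/eqP => h; rewrite -h mul0r add0r in ha; lra.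
have B0 : 0 < Bq.
  rewrite lt_neqAle Bg andbT; apply/eqP => h; rewrite -h mul0r add0r in hbe; lra.
have h1 : U * W < (A * X) * (Bq * X) by nra.
have ABp : 0 < A * Bq by apply: mulr_gt0.
have h2 : Q < (A * Bq * X) ^+ 2.
  rewrite e2; have : A * Bq * c <= A * Bq * (U * W) by rewrite ler_pM2l.
  have : A * Bq * (U * W) < A * Bq * ((A * X) * (Bq * X)) by rewrite ltr_pM2l.
  move=> *; nra.
have P0 : 0 < A * Bq * X by apply: mulr_gt0.
have h3 : - (A * Bq * X) < r by nra.
apply: mulr_gt0; first by apply: exprn_gt0.
lra.
Qed.


Lemma conjK (z : R[i]) : (z^*)^* = z.
Proof. by case: z => a b /=; rewrite opprK. Qed.

Lemma conj0 : (0 : R[i])^* = 0.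
Proof. by rewrite /= oppr0. Qed.

Lemma Bself m (v : vec R) : inV m v -> B v v = (Bre v v)%:C.
Proof. by move=> iv; rewrite /B (Bim_self iv). Qed.

Lemma decomp m (x y : vec R) : positive m x -> inV m y ->
  let al := B y x / (Bre x x)%:C in
  let u := vadd (vscale (- al) x) y in
  [/\ inV m u, B u x = 0, y = vadd (vscale al x) u, B y x = al * (Bre x x)%:C &
      forall v, inV m v -> B v x = 0 -> B y v = B u v].
Proof.
move=> [ix X0] iy al u.
have Xn : (Bre x x)%:C != 0.
  by apply/negP => /eqP [] h; move: X0; rewrite h ltxx.
have iu : inV m u := inV_lin (- al) ix iy.
have Byx : B y x = al * (Bre x x)%:C by rewrite /al; field.
split => //.
- by rewrite /u (Blin (- al) ix iy ix) (Bself ix) Byx; ring.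
- by apply/funext => k; rewrite /u /vadd /vscale; ring.
- move=> v iv vx.
  have ey : y = vadd (vscale al x) u by apply/funext => k; rewrite /u /vadd /vscale; ring.
  rewrite {1}ey (Blin al ix iu iv) (B_sym iv ix) vx conj0; ring.
Qed.

Lemma re_aux (a : R[i]) (X U : R) :
  complex.Re (a * (a * X%:C)^* + (U%:C)^*) = cabs2 a * X + U.
Proof. rewrite /cabs2; case: a => a1 a2 /=; ring. Qed.

Lemma cartan_pos m (x y z : vec R) : positive m x -> positive m y -> positive m z ->
  0 < complex.Re (B x y * B y z * B z x).
Proof.
move=> px py pz; have ix := px.1; have iy := py.1; have iz := pz.1.
have [iu ux ey Byx Byv] := decomp px iy.
have [iw wx ez Bzx Bzv] := decomp px iz.
set al := B y x / (Bre x x)%:C in iu ux ey Byx Byv.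
set be := B z x / (Bre x x)%:C in iw wx ez Bzx Bzv.
set u := vadd (vscale (- al) x) y in iu ux ey Byx Byv.
set w := vadd (vscale (- be) x) z in iw wx ez Bzx Bzv.
have Bxy : B x y = (al * (Bre x x)%:C)^* by rewrite (B_sym iy ix) Byx.
have Buz : B u z = B u w.
  rewrite (B_sym iz iu) (Bzv u iu ux) (B_sym iu iw); exact: conjK.
have Byz : B y z = al * (be * (Bre x x)%:C)^* + B u w.
  by rewrite {1}ey (Blin al ix iu iz) (B_sym iz ix) Bzx Buz.
have Byy : Bre y y = cabs2 al * Bre x x + Bre u u.
  have e : B y y = al * (al * (Bre x x)%:C)^* + (B u u)^*.
    rewrite {1}ey (Blin al ix iu iy) Bxy (B_sym iy iu) (Byv u iu ux); done.
  have := congr1 (@complex.Re R) e; rewrite (Bself iu) re_aux; done.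
have Bzz : Bre z z = cabs2 be * Bre x x + Bre w w.
  have Bxz : B x z = (be * (Bre x x)%:C)^* by rewrite (B_sym iz ix) Bzx.
  have e : B z z = be * (be * (Bre x x)%:C)^* + (B w w)^*.
    rewrite {1}ez (Blin be ix iw iz) Bxz (B_sym iz iw) (Bzv w iw wx); done.
  have := congr1 (@complex.Re R) e; rewrite (Bself iw) re_aux; done.
rewrite Bxy Byz Bzx.
rewrite ?conjE.
apply: (cp_alg (px.2) (neg_compl px iu ux) (neg_compl px iw wx) (cs_compl px iu iw ux wx)).
- by rewrite -Byy; exact: py.2.
- by rewrite -Bzz; exact: pz.2.
Qed.


Definition E (th : R) : R[i] := (cos th +i* sin th).

Lemma cabs2E th : cabs2 (E th) = 1.
Proof. by rewrite /cabs2 /E /= cos2Dsin2. Qed.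

Lemma E_add a b : E (a + b) = E a * E b.
Proof. by rewrite /E cosD sinD /=; congr (_ +i* _); ring. Qed.

Lemma E_opp a : E (- a) = conjc (E a).
Proof. by rewrite /E cosN sinN. Qed.

Lemma argE (p : R[i]) : 0 < complex.Re p ->
  p = (Num.sqrt (cabs2 p))%:C * E (atan (complex.Im p / complex.Re p)).
Proof.
case: p => a b /= ha.
have an : a != 0 by rewrite gt_eqF.
set t := b / a.
have hc : cos (atan t) = (Num.sqrt (1 + t ^+ 2))^-1 := cos_atan t.
have Sp : 0 < Num.sqrt (1 + t ^+ 2).
  by rewrite sqrtr_gt0; have := sqr_ge0 t; lra.
have cn : cos (atan t) != 0 by rewrite hc invr_neq0 // gt_eqF.
have hs : sin (atan t) = t * cos (atan t).
  have := atanK t; rewrite /tan => e; rewrite -[X in X * _]e; field; exact: cn.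
have hsq : Num.sqrt (a ^+ 2 + b ^+ 2) = a * Num.sqrt (1 + t ^+ 2).
  have -> : a ^+ 2 + b ^+ 2 = a ^+ 2 * (1 + t ^+ 2) by rewrite /t; field.
  by rewrite sqrtrM ?sqr_ge0 // sqrtr_sqr ger0_norm // ltW.
rewrite /cabs2 /= hsq /E hs hc /=.
apply/eqP; rewrite eq_complex /=; apply/andP; split; apply/eqP.
- field; by rewrite gt_eqF.
- rewrite /t; field; by rewrite gt_eqF.
Qed.


Definition vzero : vec R := fun _ => 0.

Lemma inV_zero m : inV m vzero.
Proof.
split => //.
rewrite (_ : (fun k => cabs2 (vzero k)) = fun=> 0); first exact: cvg0.
by apply/funext => k; rewrite /cabs2 /vzero /= expr0n /= addr0.
Qed.

Lemma vadd0 (v : vec R) : vadd v vzero = v.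
Proof. by apply/funext => k; rewrite /vadd /vzero addr0. Qed.

Lemma inV_scale m c (v : vec R) : inV m v -> inV m (vscale c v).
Proof. move=> iv; rewrite -[vscale c v]vadd0. apply: (@inV_lin m c v vzero iv). exact: inV_zero. Qed.

Lemma B_zero_l m (w : vec R) : inV m w -> B vzero w = 0.
Proof.
move=> iw; have i0 := inV_zero m.
have := Blin 1 i0 i0 iw.
have -> : vadd (vscale 1 vzero) vzero = vzero.
  by apply/funext => k; rewrite /vadd /vscale /vzero; ring.
move=> e; apply: (@addrI _ (B vzero w)); rewrite addr0 {3}e mul1r //.
Qed.

Lemma B_scale_l m c (u w : vec R) : inV m u -> inV m w -> B (vscale c u) w = c * B u w.
Proof.
move=> iu iw; rewrite -[vscale c u]vadd0 (Blin c iu (inV_zero m) iw) (B_zero_l iw).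
by rewrite addr0.
Qed.

Lemma conjM (a b : R[i]) : conjc (a * b) = conjc a * conjc b.
Proof. case: a => a1 a2; case: b => b1 b2 /=; congr (_ +i* _); ring. Qed.

Lemma B_scale_r m c (u w : vec R) : inV m u -> inV m w -> B u (vscale c w) = conjc c * B u w.
Proof.
move=> iu iw; have icw := inV_scale c iw.
by rewrite (B_sym icw iu) (B_scale_l c iw iu) conjM (B_sym iu iw) conjK.
Qed.

Lemma B_ext (u w u' w' : vec R) : (forall k, u k * conjc (w k) = u' k * conjc (w' k)) ->
  B u w = B u' w'.
Proof.
move=> h; rewrite /B !BreE !BimE.
have -> : tre u w = tre u' w' by apply/funext => k; rewrite /tre h.
have -> : tim u w = tim u' w' by apply/funext => k; rewrite /tim h.
by rewrite h.
Qed.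

Lemma unitC (mu : R[i]) : cabs2 mu = 1 -> mu * conjc mu = 1.
Proof.
case: mu => a b; rewrite /cabs2 /= => h; apply/eqP; rewrite eq_complex /=.
apply/andP; split; apply/eqP; [rewrite -h|]; ring.
Qed.

Lemma B_unit (mu : R[i]) (u w : vec R) : cabs2 mu = 1 -> B (vscale mu u) (vscale mu w) = B u w.
Proof.
move=> h; apply: B_ext => k; rewrite /vscale conjM.
have e := unitC h.
by rewrite mulrACA e mul1r.
Qed.

Lemma Bunit_zero m (T : vec R -> vec R) : Bunitary m T -> T vzero = vzero.
Proof.
case=> _ hlin _ _ _; have i0 := inV_zero m.
have := hlin 1 _ _ i0 i0.
have -> : vadd (vscale 1 vzero) vzero = vzero.
  by apply/funext => k; rewrite /vadd /vscale /vzero; ring.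
move=> e; apply/funext => k.
have := congr1 (fun f => f k) e; rewrite /vadd /vscale /vzero mul1r => h.
have : T vzero k + T vzero k - T vzero k = 0 by rewrite -h subrr.
by rewrite addrK.
Qed.

Lemma Bunit_scale m (T : vec R -> vec R) c v : Bunitary m T -> inV m v ->
  T (vscale c v) = vscale c (T v).
Proof.
move=> hT iv; have hz := Bunit_zero hT; case: hT => _ hlin _ _ _.
by rewrite -[vscale c v]vadd0 (hlin c _ _ iv (inV_zero m)) hz vadd0.
Qed.

Lemma Bunitary_scaled m (T : vec R -> vec R) (mu : R[i]) : Bunitary m T -> cabs2 mu = 1 ->
  Bunitary m (fun v => vscale mu (T v)).
Proof.
move=> hT hmu; have mun : mu != 0.
  by apply/negP => /eqP h; move: hmu; rewrite h /cabs2 /= expr0n /= addr0 => /eqP; rewrite eq_sym oner_eq0.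
case: hT => hin hlin hinj hsurj hB; split.
- by move=> v iv; apply: inV_scale; exact: hin.
- move=> a v w iv iw; rewrite hlin //; apply/funext => k; rewrite /vadd /vscale; ring.
- move=> v w iv iw e; apply: hinj => //; apply/funext => k.
  have := congr1 (fun f => f k) e; rewrite /vscale; exact: mulfI.
- move=> w iw; have [v iv Tv] := hsurj _ (inV_scale (conjc mu) iw).
  exists v => //; rewrite Tv; apply/funext => k; rewrite /vscale mulrA unitC // mul1r //.
- by move=> v w iv iw; rewrite B_unit // hB.
Qed.

Lemma pos_T m (T : vec R -> vec R) v : Bunitary m T -> positive m v -> positive m (T v).
Proof.
case=> hin _ _ _ hB [iv vp]; split; first exact: hin.
by have := congr1 (@complex.Re R) (hB v v iv iv) => /= ->.
Qed.

Lemma pos_unit m mu (v : vec R) : cabs2 mu = 1 -> positive m v -> positive m (vscale mu v).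
Proof.
move=> hmu [iv vp]; split; first exact: inV_scale.
by have := congr1 (@complex.Re R) (B_unit v v hmu) => /= ->.
Qed.


Lemma cabs2_conj (z : R[i]) : cabs2 (conjc z) = cabs2 z.
Proof. by case: z => a b; rewrite /cabs2 /= sqrrN. Qed.

Lemma cabs2_real (t : R) : cabs2 (t%:C) = t ^+ 2.
Proof. by rewrite /cabs2 /= expr0n /= addr0. Qed.

Lemma cabs2_gt0 (z : R[i]) : z != 0 -> 0 < cabs2 z.
Proof.
case: z => a b h; rewrite /cabs2 /= lt_neqAle addr_ge0 ?sqr_ge0 // andbT.
apply: contra h; rewrite eq_sym paddr_eq0 ?sqr_ge0 // !sqrf_eq0 => /andP[/eqP -> /eqP ->].
by [].
Qed.

Lemma unit_pos (nu : R[i]) (K P : R) : cabs2 nu = 1 -> 0 < K -> 0 <= P ->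
  nu * K%:C = P%:C -> nu = 1.
Proof.
case: nu => a b; rewrite /cabs2 /= => h K0 P0 /eqP; rewrite eq_complex /= => /andP[/eqP e1 /eqP e2].
have b0 : b = 0.
  have hb : b * K = 0 * K by rewrite mulr0 add0r in e2; rewrite e2 mul0r.
  exact: (mulIf (negbT (gt_eqF K0)) hb).
have a0 : 0 <= a.
  have : 0 <= a * K by rewrite mulr0 subr0 in e1; rewrite e1.
  nra.
rewrite b0 in h *; apply/eqP; rewrite eq_complex /= eqxx andbT.
apply/eqP; rewrite expr0n /= addr0 in h; nra.
Qed.

Lemma mu_key (lam mg mh mgh : R[i]) : cabs2 lam = 1 -> cabs2 mgh = 1 ->
  conjc lam * mg * mh * conjc mgh = 1 -> mgh * lam = mg * mh.
Proof.
move=> hl hm hnu.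
have e1 := unitC hl; have e2 := unitC hm.
have -> : mg * mh = (lam * conjc lam) * (mgh * conjc mgh) * (mg * mh) by rewrite e1 e2 !mul1r.
have -> : (lam * conjc lam) * (mgh * conjc mgh) * (mg * mh) = mgh * lam * (conjc lam * mg * mh * conjc mgh)
  by ring.
by rewrite hnu mulr1.
Qed.

End Aux.
Local Open Scope complex_scope.

Theorem mainTheorem5 (R : realType) (G : topologicalType)
    (mul : G -> G -> G) (inv : G -> G) (one : G)
    (m : option nat) (rho : G -> vec R -> vec R) (x : vec R) :
  is_topological_group mul inv one ->
  pu_representation mul m rho ->
  positive m x ->
  total_orbit m rho x ->
  (exists omega : G -> G -> R,
      [/\ (forall g l, omega l g = - omega g l),
          (forall h g l, omega (mul h g) (mul h l) = omega g l) &
          (forall g l k, omega l k - omega g k + omega g l =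
                         Cart (rho g x) (rho l x) (rho k x))]) ->
  exists rho' : G -> vec R -> vec R,
    [/\ (forall g, Bunitary m (rho' g)),
        (forall g h v, inV m v -> rho' (mul g h) v = rho' g (rho' h v)) &
        (forall g, exists2 mu : R[i], cabs2 mu = 1 &
            forall v, inV m v -> rho' g v = vscale mu (rho g v))].
Proof.
move=> [assoc mul1 mulV _ _] [hU hH _] px _ [omega [halt hinv hcoc]].
have mulg1 : forall a, mul a one = a.
  move=> a.
  have aV : mul a (inv a) = one.
    have h1 : mul (inv a) (mul a (inv a)) = inv a by rewrite assoc mulV mul1.
    have : mul (inv (inv a)) (mul (inv a) (mul a (inv a))) = mul (inv (inv a)) (inv a) by rewrite h1.
    by rewrite assoc mulV mul1.
  by rewrite -(mulV a) assoc aV mul1.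
have ix := px.1.
pose s g := B (rho g x) x.
have hs : forall g, s g != 0.
  move=> g; have py := pos_T (hU g) px.
  have := cartan_pos px px py; rewrite /s.
  apply: contraTneq => ->; by rewrite mulr0 /= ltxx.
pose r g := Num.sqrt (cabs2 (s g)).
have hr : forall g, 0 < r g by move=> g; rewrite /r sqrtr_gt0 cabs2_gt0.
have hr2 : forall g, r g ^+ 2 = cabs2 (s g) by move=> g; rewrite /r sqr_sqrtr // cabs2_ge0.
pose phi g := - omega one g.
pose mu g := E (phi g) * conjc (s g) * ((r g)^-1)%:C.
have hmu : forall g, cabs2 (mu g) = 1.
  move=> g; rewrite /mu !cabs2M cabs2E cabs2_conj cabs2_real -hr2 mul1r.
  have := hr g => hg; rewrite exprVn mulfV // expf_neq0 // gt_eqF //.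
have hsmu : forall g, s g = conjc (mu g) * E (phi g) * (r g)%:C.
  move=> g; rewrite /mu !conjM conjK conjc_real.
  have e := unitC (cabs2E (phi g)).
  have -> : conjc (E (phi g)) * s g * ((r g)^-1)%:C * E (phi g) * (r g)%:C =
     (E (phi g) * conjc (E (phi g))) * s g * ((r g)^-1 * r g)%:C by rewrite rmorphM; ring.
  by rewrite e mulVf ?gt_eqF // mul1r mulr1.
clearbody mu.
have [l0 hl0 h11] := hH one one.
have hc : rho one x = vscale (conjc l0) x.
  have [_ _ _ hsurj _] := hU one.
  have [w iw ew] := hsurj x ix.
  have := h11 w iw; rewrite mul1 ew => ex.
  apply/funext => k; have := congr1 (fun f => f k) ex; rewrite /vscale => ->.
  by rewrite mulrA [conjc l0 * l0]mulrC unitC // mul1r.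
have hc1 : cabs2 (conjc l0) = 1 by rewrite cabs2_conj.
have key : forall g h lam, cabs2 lam = 1 ->
    (forall v, inV m v -> rho (mul g h) v = vscale lam (rho g (rho h v))) ->
    mu (mul g h) * lam = mu g * mu h.
  move=> g h lam hlam hgh.
  have py1 : positive m (rho one x) := pos_T (hU one) px.
  have py2 : positive m (rho g x) := pos_T (hU g) px.
  have py3 : positive m (rho (mul g h) x) := pos_T (hU (mul g h)) px.
  have hp := cartan_pos py1 py2 py3.
  have hcart := hcoc one g (mul g h).
  rewrite -{1}(mulg1 g) hinv in hcart.
  have hE := argE hp.
  rewrite -/(Cart (rho one x) (rho g x) (rho (mul g h) x)) -hcart in hE.
  have eth : omega one h - omega one (mul g h) + omega one g = phi (mul g h) - phi g - phi h.
    by rewrite /phi; lra.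
  rewrite eth E_add E_add (E_opp (phi g)) (E_opp (phi h)) in hE.
  have ixh := (pos_T (hU h) px).1.
  have ig := (hU g); case: (ig) => hin_g _ _ _ hB_g.
  have iyg := hin_g _ ix.
  have iygh := hin_g _ ixh.
  have b12 : B (rho one x) (rho g x) = conjc l0 * conjc (s g).
    by rewrite hc (B_scale_l _ ix iyg) (B_sym iyg ix).
  have b23 : B (rho g x) (rho (mul g h) x) = conjc lam * conjc (s h).
    by rewrite (hgh x ix) (B_scale_r _ iyg iygh) hB_g // (B_sym ixh ix).
  have b31 : B (rho (mul g h) x) (rho one x) = conjc (conjc l0) * s (mul g h).
    by rewrite hc (B_scale_r _ py3.1 ix).
  rewrite b12 b23 b31 in hE.
  rewrite (hsmu g) (hsmu h) (hsmu (mul g h)) !conjM !conjK !conjc_real in hE.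
  set Eg := E (phi g) in hE; set Eh := E (phi h) in hE; set Egh := E (phi (mul g h)) in hE.
  set P := Num.sqrt _ in hE.
  set nu := conjc lam * mu g * mu h * conjc (mu (mul g h)).
  have e0 := unitC hc1; rewrite conjK in e0.
  have hE2 : nu * ((r g)%:C * (r h)%:C * (r (mul g h))%:C) * (Egh * conjc Eg * conjc Eh) =
             P%:C * (Egh * conjc Eg * conjc Eh).
    rewrite -hE -[LHS]mul1r -e0 /nu; ring.
  have Ene : Egh * conjc Eg * conjc Eh != 0.
    apply/negP => /eqP h0; have := cabs2M (Egh * conjc Eg) (conjc Eh).
    rewrite h0 cabs2M !cabs2_conj /Egh /Eg /Eh !cabs2E !mul1r cabs2_real expr0n /=.
    by move=> /eqP; rewrite eq_sym oner_eq0.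
  have hE3 := mulIf Ene hE2.
  rewrite -!rmorphM in hE3.
  have hnu : nu = 1.
    apply: (unit_pos _ _ _ hE3).
    - by rewrite /nu !cabs2M !cabs2_conj hlam hmu hmu hmu !mul1r.
    - by apply: mulr_gt0; [apply: mulr_gt0|].
    - by rewrite /P sqrtr_ge0.
  exact: mu_key hlam (hmu _) hnu.
exists (fun g v => vscale (mu g) (rho g v)); split.
- by move=> g; apply: Bunitary_scaled.
- move=> g h v iv; have [lam hlam hgh] := hH g h.
  have ivh := (hU h); case: ivh => hin_h _ _ _ _.
  rewrite (hgh v iv) (Bunit_scale _ (hU g) (hin_h _ iv)).
  apply/funext => k; rewrite /vscale mulrA (key g h lam hlam hgh) mulrA.
  by [].
- by move=> g; exists (mu g).
Qed.
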